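(* Let $\psi_S$ be the Shannon wavelet, i.e. $|\hat\psi_S(\xi)|^2=1$ if $|\xi|\in[\pi,2\pi]$ and $0$ otherwise, and take $\psi=\psi_S$ in the definitions of the context. Then for every $d\in\mathbb{R}$ and $\ell\ge1$, $$\sum_{i,j=0}^\ell w^{AV}_iV_d(i,j)w^{AV}_j=\frac{\pi\,g(-4d)}{2(2-2^{-\ell})\kappa_\ell\log^2(2)\,g^2(-2d)},\qquad g(x)=\int_\pi^{2\pi}\lambda^x\,d\lambda.$$
   Context: For a wavelet $\psi$ with Fourier transform $\hat\psi(\xi)=\int\psi(t)e^{-i\xi t}dt$: for $u\ge0$, $\mathbf e_u(\xi)=2^{-u/2}[1,e^{-i2^{-u}\xi},\dots,e^{-i(2^u-1)2^{-u}\xi}]^T$, $\mathbf D_u(\lambda;d)=\sum_{l\in\mathbb{Z}}|\lambda+2l\pi|^{-2d}\mathbf e_u(\lambda+2l\pi)\overline{\hat\psi(\lambda+2l\pi)}\hat\psi(2^{-u}(\lambda+2l\pi))$, $I_u(d)=\int_{-\pi}^{\pi}|\mathbf D_u(\lambda;d)|^2d\lambda$, $K(d)=\int_{\mathbb{R}}|\xi|^{-2d}|\hat\psi(\xi)|^2d\xi$, $V_d(i,j)=\frac{4\pi\,2^{2d|i-j|}2^{i\wedge j}}{K(d)^2}I_{|i-j|}(d)$. For $\ell\ge1$: $\eta_\ell=\sum_{j=0}^\ell j\frac{2^{-j}}{2-2^{-\ell}}$, $\kappa_\ell=\sum_{j=0}^\ell(j-\eta_\ell)^2\frac{2^{-j}}{2-2^{-\ell}}$,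 $w^{AV}_i=\frac{(i-\eta_\ell)2^{-i}}{2\log(2)\kappa_\ell(2-2^{-\ell})}$, $i=0,\dots,\ell$. *)

(* Defs.v *)
From Stdlib Require Import Reals Lra ZArith Classical ClassicalEpsilon.
Open Scope R_scope.

Definition Cx := (R * R)%type.
Definition Cadd (z w : Cx) : Cx := (fst z + fst w, snd z + snd w).
Definition Cmul (z w : Cx) : Cx :=
  (fst z * fst w - snd z * snd w, fst z * snd w + snd z * fst w).
Definition Cconj (z : Cx) : Cx := (fst z, - snd z).
Definition Cscal (r : R) (z : Cx) : Cx := (r * fst z, r * snd z).
Definition Cnorm2 (z : Cx) : R := fst z ^ 2 + snd z ^ 2.
Definition Cexpi (t : R) : Cx := (cos t, sin t).

Definition series_Z (f : Z -> R) (s : R) : Prop :=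
  exists s1 s2,
    infinite_sum (fun n => f (Z.of_nat n)) s1 /\
    infinite_sum (fun n => f (- Z.of_nat (S n))%Z) s2 /\ s = s1 + s2.
Definition zsumR (f : Z -> R) : R := epsilon (inhabits 0) (series_Z f).
Definition zsumC (f : Z -> Cx) : Cx :=
  (zsumR (fun l => fst (f l)), zsumR (fun l => snd (f l))).

Definition Rint (f : R -> R) (a b : R) : R :=
  epsilon (inhabits 0)
    (fun v => exists pr : Riemann_integrable f a b, RiemannInt pr = v).
Definition improper_int (f : R -> R) (v : R) : Prop :=
  forall eps, eps > 0 -> exists M, forall a b, a <= - M -> M <= b ->
    exists pr : Riemann_integrable f a b, Rabs (RiemannInt pr - v) < eps.
Definition RintR (f : R -> R) : R := epsilon (inhabits 0) (improper_int f).

(* k-th component (k = 0..2^u-1) of e_u(xi) *)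
Definition e_u (u : nat) (xi : R) (k : nat) : Cx :=
  Cscal (Rpower 2 (- INR u / 2)) (Cexpi (- INR k * xi / 2 ^ u)).

Definition D_u (psih : R -> Cx) (d : R) (u : nat) (lam : R) (k : nat) : Cx :=
  zsumC (fun l =>
    let x := lam + 2 * IZR l * PI in
    Cscal (Rpower (Rabs x) (- 2 * d))
      (Cmul (e_u u x k) (Cmul (Cconj (psih x)) (psih (x / 2 ^ u))))).

Definition D_u_norm2 (psih : R -> Cx) (d : R) (u : nat) (lam : R) : R :=
  sum_f_R0 (fun k => Cnorm2 (D_u psih d u lam k)) (Nat.pow 2 u - 1).

Definition I_u (psih : R -> Cx) (u : nat) (d : R) : R :=
  Rint (fun lam => D_u_norm2 psih d u lam) (- PI) PI.

Definition K_d (psih : R -> Cx) (d : R) : R :=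
  RintR (fun xi => Rpower (Rabs xi) (- 2 * d) * Cnorm2 (psih xi)).

Definition absdiff (i j : nat) : nat := ((i - j) + (j - i))%nat.

Definition V_d (psih : R -> Cx) (d : R) (i j : nat) : R :=
  4 * PI * Rpower 2 (2 * d * INR (absdiff i j)) * 2 ^ (Nat.min i j)
    * I_u psih (absdiff i j) d / (K_d psih d) ^ 2.

Definition eta (l : nat) : R :=
  sum_f_R0 (fun j => INR j * (/ 2) ^ j / (2 - (/ 2) ^ l)) l.
Definition kappa (l : nat) : R :=
  sum_f_R0 (fun j => (INR j - eta l) ^ 2 * (/ 2) ^ j / (2 - (/ 2) ^ l)) l.
Definition wAV (l i : nat) : R :=
  (INR i - eta l) * (/ 2) ^ i / (2 * ln 2 * kappa l * (2 - (/ 2) ^ l)).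

Definition g (x : R) : R := Rint (fun lam => Rpower lam x) PI (2 * PI).

Definition shannon (psih : R -> Cx) : Prop :=
  forall xi, (PI <= Rabs xi <= 2 * PI -> Cnorm2 (psih xi) = 1) /\
             (~ (PI <= Rabs xi <= 2 * PI) -> Cnorm2 (psih xi) = 0).

(* Main.v *)
Require Import Defs.
From Stdlib Require Import Reals RList Lra Lia ZArith Classical ClassicalEpsilon FunctionalExtensionality.
Open Scope R_scope.

Lemma Rint_eq f a b v :
  (exists pr : Riemann_integrable f a b, RiemannInt pr = v) -> Rint f a b = v.
Proof.
  intros H. unfold Rint.
  destruct (epsilon_spec (inhabits 0)
     (fun v => exists pr : Riemann_integrable f a b, RiemannInt pr = v) (ex_intro _ v H))
    as [pr' Hpr'].
  destruct H as [pr Hpr]. rewrite <- Hpr', <- Hpr. apply RiemannInt_P5.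
Qed.

Lemma ftc f G a b (hab : a <= b)
  (C : forall t, a <= t <= b -> continuity_pt f t)
  (D : forall t, a <= t <= b -> derivable_pt_lim G t (f t))
  (pr : Riemann_integrable f a b) : RiemannInt pr = G b - G a.
Proof.
  rewrite (RiemannInt_P20 hab (FTC_P1 hab C) pr).
  assert (HA : antiderivative f G a b).
  { split; [|exact hab]. intros x Hx.
    exists (exist _ (f x) (D x Hx)). reflexivity. }
  destruct (antiderivative_Ucte _ _ _ _ _ (RiemannInt_P29 hab C) HA) as [c Hc].
  rewrite (Hc b), (Hc a); try lra.
Qed.

Lemma zero_open_stepfun d a b : a <= b -> (forall t, a < t < b -> d t = 0) ->
  IsStepFun d a b.
Proof.
  intros hab H. exists (cons a (cons b nil)). exists (cons 0 nil).
  unfold adapted_couple; repeat split.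
  - unfold ordered_Rlist; intros; simpl in H0; inversion H0;
      [ simpl; assumption | elim (Nat.nle_succ_0 _ H2) ].
  - simpl; unfold Rmin; destruct (Rle_dec a b); lra.
  - simpl; unfold Rmax; destruct (Rle_dec a b); lra.
  - unfold constant_D_eq, open_interval; intros; simpl in H0.
    inversion H0; [ simpl in *; apply H; subst; simpl in *; lra | elim (Nat.nle_succ_0 _ H3) ].
Qed.

Lemma zero_open_int d a b : a <= b -> (forall t, a < t < b -> d t = 0) ->
  Riemann_integrable d a b.
Proof.
  intros hab H eps.
  exists (mkStepFun (zero_open_stepfun d a b hab H)).
  exists (mkStepFun (StepFun_P4 a b 0)). split.
  - intros t _. simpl. unfold fct_cte. rewrite Rminus_diag, Rabs_R0. lra.
  - rewrite StepFun_P18. rewrite Rmult_0_l, Rabs_R0. apply cond_pos.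
Qed.

Lemma int_open f h G a b (hab : a <= b)
  (E : forall t, a < t < b -> f t = h t)
  (C : forall t, a <= t <= b -> continuity_pt h t)
  (D : forall t, a <= t <= b -> derivable_pt_lim G t (h t)) :
  exists pr : Riemann_integrable f a b, RiemannInt pr = G b - G a.
Proof.
  pose proof (continuity_implies_RiemannInt hab C) as prh.
  assert (pr : Riemann_integrable f a b).
  { apply Riemann_integrable_ext with (fun x => h x + 1 * (f x - h x)).
    - intros; ring.
    - apply RiemannInt_P10; [exact prh|].
      apply zero_open_int; [exact hab|]. intros t Ht; rewrite E; auto; ring. }
  exists pr. rewrite (RiemannInt_P18 pr prh hab E). apply ftc; auto.
Qed.

Definition Prim (x : R) : R -> R :=
  if Req_EM_T x (-1) then ln else fun s => Rpower s (x+1) / (x+1).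

Lemma Prim_deriv x s : 0 < s -> derivable_pt_lim (Prim x) s (Rpower s x).
Proof.
  intros Hs. unfold Prim. destruct (Req_EM_T x (-1)) as [E|E].
  - subst x. replace (Rpower s (-1)) with (/ s).
    + apply derivable_pt_lim_ln; exact Hs.
    + replace (-1) with (- (1)) by ring. rewrite Rpower_Ropp, Rpower_1; auto.
  - assert (Hx : x + 1 <> 0) by lra.
    replace (fun s0 => Rpower s0 (x + 1) / (x + 1))
      with (mult_real_fct (/ (x+1)) (fun s0 => Rpower s0 (x + 1))).
    + replace (Rpower s x) with (/ (x+1) * ((x+1) * Rpower s (x + 1 - 1))).
      * apply derivable_pt_lim_scal. apply derivable_pt_lim_power; exact Hs.
      * replace (x + 1 - 1) with x by ring. field. exact Hx.
    + apply functional_extensionality; intro y; unfold mult_real_fct; field; exact Hx.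
Qed.

Lemma aff_deriv c e t : derivable_pt_lim (fun t => c * t + e) t c.
Proof.
  intros eps Heps. exists (mkposreal 1 Rlt_0_1). intros h Hh _.
  replace ((c * (t + h) + e - (c * t + e)) / h - c) with 0 by (field; exact Hh).
  rewrite Rabs_R0; exact Heps.
Qed.

Lemma pow_aff_deriv x c e t : 0 < c * t + e ->
  derivable_pt_lim (fun t => Rpower (c * t + e) x) t (x * Rpower (c*t+e) (x - 1) * c).
Proof.
  intros H.
  apply (derivable_pt_lim_comp (fun t => c * t + e) (fun s => Rpower s x)).
  - apply aff_deriv.
  - apply derivable_pt_lim_power; exact H.
Qed.

Lemma prim_aff_deriv x c e t : c <> 0 -> 0 < c * t + e ->
  derivable_pt_lim (fun t => Prim x (c * t + e) / c) t (Rpower (c*t+e) x).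
Proof.
  intros Hc H.
  replace (fun t => Prim x (c * t + e) / c)
    with (mult_real_fct (/ c) (fun t => Prim x (c * t + e))).
  - replace (Rpower (c*t+e) x) with (/ c * (Rpower (c*t+e) x * c)) by (field; exact Hc).
    apply derivable_pt_lim_scal.
    apply (derivable_pt_lim_comp (fun t => c * t + e) (Prim x)).
    + apply aff_deriv.
    + apply Prim_deriv; exact H.
  - apply functional_extensionality; intro y; unfold mult_real_fct; field; exact Hc.
Qed.

Lemma aff_int f x c e a b : a <= b -> c <> 0 ->
  (forall t, a <= t <= b -> 0 < c * t + e) ->
  (forall t, a < t < b -> f t = Rpower (c * t + e) x) ->
  exists pr : Riemann_integrable f a b,
    RiemannInt pr = (Prim x (c * b + e) - Prim x (c * a + e)) / c.
Proof.
  intros hab Hc Hpos E.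
  replace ((Prim x (c * b + e) - Prim x (c * a + e)) / c)
    with (Prim x (c * b + e) / c - Prim x (c * a + e) / c) by (field; exact Hc).
  apply (int_open f (fun t => Rpower (c * t + e) x) (fun t => Prim x (c * t + e) / c));
    auto.
  - intros t Ht. apply derivable_continuous_pt.
    exists (x * Rpower (c*t+e) (x - 1) * c). apply pow_aff_deriv; auto.
  - intros t Ht. apply prim_aff_deriv; auto.
Qed.

Lemma zero_int f a b : a <= b -> (forall t, a < t < b -> f t = 0) ->
  exists pr : Riemann_integrable f a b, RiemannInt pr = 0.
Proof.
  intros hab E.
  destruct (int_open f (fun _ => 0) (fun _ => 0) a b hab E) as [pr Hpr].
  - intros; apply continuity_pt_const; intros u v; reflexivity.
  - intros; apply derivable_pt_lim_const.
  - exists pr; rewrite Hpr; ring.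
Qed.

Lemma PI_bounds : 0 < PI <= 4.
Proof. split; [apply PI_RGT_0 | apply PI_4]. Qed.

Lemma g_val x : g x = Prim x (2 * PI) - Prim x PI.
Proof.
  unfold g. apply Rint_eq.
  destruct (aff_int (fun lam => Rpower lam x) x 1 0 PI (2*PI)) as [pr Hpr].
  - pose proof PI_bounds; lra.
  - lra.
  - intros; pose proof PI_bounds; lra.
  - intros t _. f_equal; ring.
  - exists pr. rewrite Hpr. replace (1 * (2*PI) + 0) with (2*PI) by ring.
    replace (1 * PI + 0) with PI by ring. field.
Qed.

Lemma zsumR_unique f s : series_Z f s -> zsumR f = s.
Proof.
  intros H. unfold zsumR.
  destruct (epsilon_spec (inhabits 0) (series_Z f) (ex_intro _ s H))
    as [t1 [t2 [H1 [H2 H3]]]].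
  destruct H as [s1 [s2 [K1 [K2 K3]]]].
  rewrite H3, K3. rewrite (uniqueness_sum _ _ _ H1 K1), (uniqueness_sum _ _ _ H2 K2).
  reflexivity.
Qed.

Lemma isum_single (a : nat -> R) n0 c : a n0 = c -> (forall n, n <> n0 -> a n = 0) ->
  infinite_sum a c.
Proof.
  intros H0 H1.
  assert (K : forall n, sum_f_R0 a n = if Nat.leb n0 n then c else 0).
  { induction n as [|n IH].
    - simpl. destruct n0 as [|n0]; simpl.
      + exact H0.
      + apply H1; lia.
    - simpl. rewrite IH.
      destruct (Nat.leb_spec n0 n) as [Ha|Ha]; destruct (Nat.leb_spec n0 (S n)) as [Hb|Hb]; try lia.
      + rewrite H1 by lia; ring.
      + replace (S n) with n0 by lia. rewrite H0; ring.
      + rewrite H1 by lia; ring. }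
  intros eps Heps. exists n0. intros n Hn. rewrite K.
  destruct (Nat.leb_spec n0 n) as [Ha|Ha]; try lia. unfold Rdist. rewrite Rminus_diag, Rabs_R0. lra.
Qed.

Lemma zsumR_single_pos f n0 c : f (Z.of_nat n0) = c ->
  (forall l, l <> Z.of_nat n0 -> f l = 0) -> zsumR f = c.
Proof.
  intros H0 H1. apply zsumR_unique. exists c, 0. repeat split.
  - apply isum_single with n0; auto. intros n Hn. apply H1. lia.
  - apply isum_single with 0%nat; [apply H1; lia|]. intros n _. apply H1. lia.
  - ring.
Qed.

Lemma zsumR_single_neg f n0 c : f (- Z.of_nat (S n0))%Z = c ->
  (forall l, l <> (- Z.of_nat (S n0))%Z -> f l = 0) -> zsumR f = c.
Proof.
  intros H0 H1. apply zsumR_unique. exists 0, c. repeat split.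
  - apply isum_single with 0%nat; [apply H1; lia|]. intros n _. apply H1. lia.
  - apply isum_single with n0; auto. intros n Hn. apply H1. lia.
  - ring.
Qed.

Lemma zsumR_zero f : (forall l, f l = 0) -> zsumR f = 0.
Proof. intros H. apply zsumR_single_pos with 0%nat; auto. Qed.

Lemma Cnorm2_zero z : Cnorm2 z = 0 -> fst z = 0 /\ snd z = 0.
Proof. destruct z as [p q]; unfold Cnorm2; simpl; intros H; split; nra. Qed.

Definition T psih d u lam k (l : Z) : Cx :=
  let x := lam + 2 * IZR l * PI in
  Cscal (Rpower (Rabs x) (- 2 * d))
    (Cmul (e_u u x k) (Cmul (Cconj (psih x)) (psih (x / 2 ^ u)))).

Lemma D_u_T psih d u lam k : D_u psih d u lam k = zsumC (T psih d u lam k).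
Proof. reflexivity. Qed.

Lemma T_zero psih d u lam k l :
  let x := lam + 2 * IZR l * PI in
  (Cnorm2 (psih x) = 0 \/ Cnorm2 (psih (x / 2 ^ u)) = 0) ->
  fst (T psih d u lam k l) = 0 /\ snd (T psih d u lam k l) = 0.
Proof.
  intros x H. unfold T. fold x.
  destruct (psih x) as [p1 p2] eqn:E1. destruct (psih (x / 2 ^ u)) as [q1 q2] eqn:E2.
  destruct (e_u u x k) as [r1 r2].
  unfold Cscal, Cmul, Cconj; simpl.
  destruct H as [H|H]; apply Cnorm2_zero in H; simpl in H; destruct H as [Ha Hb];
    rewrite Ha, Hb; split; ring.
Qed.

Lemma T_one psih d lam l :
  let x := lam + 2 * IZR l * PI in
  Cnorm2 (psih x) = 1 ->
  fst (T psih d 0 lam 0 l) = Rpower (Rabs x) (-2 * d) /\ snd (T psih d 0 lam 0 l) = 0.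
Proof.
  intros x H. unfold T. fold x.
  replace (x / 2 ^ 0) with x by (simpl; field).
  unfold e_u. simpl INR.
  replace (- 0 / 2) with 0 by field. replace (- 0 * x / 2 ^ 0) with 0 by (simpl; field).
  rewrite Rpower_O by lra. unfold Cexpi. rewrite cos_0, sin_0.
  destruct (psih x) as [p1 p2]. unfold Cnorm2 in H; simpl in H.
  unfold Cscal, Cmul, Cconj; simpl.
  assert (H2 : p1 * p1 + p2 * p2 = 1) by lra. split; [|ring].
  transitivity (Rpower (Rabs x) (-2 * d) * (p1 * p1 + p2 * p2)); [ring|]. rewrite H2; ring.
Qed.

Lemma loc lam l : -PI < lam < PI -> lam <> 0 ->
  PI <= Rabs (lam + 2 * IZR l * PI) <= 2 * PI ->
  (l = 1%Z /\ lam < 0) \/ (l = (-1)%Z /\ 0 < lam).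
Proof.
  intros H1 H2 H3. pose proof PI_bounds as HP.
  assert (C : (l <= -2 \/ l = -1 \/ l = 0 \/ l = 1 \/ 2 <= l)%Z) by lia.
  destruct C as [C|[C|[C|[C|C]]]].
  - apply IZR_le in C. assert (IZR l * PI <= -2 * PI) by nra.
    exfalso. revert H3. unfold Rabs; destruct (Rcase_abs _); intros; lra.
  - subst l. right. split; auto. simpl in H3.
    destruct (Rtotal_order lam 0) as [L|[L|L]]; try lra.
    exfalso. revert H3. unfold Rabs; destruct (Rcase_abs _); intros; lra.
  - subst l. exfalso. simpl in H3. revert H3. unfold Rabs; destruct (Rcase_abs _); intros; lra.
  - subst l. left. split; auto. simpl in H3.
    destruct (Rtotal_order lam 0) as [L|[L|L]]; try lra.
    exfalso. revert H3. unfold Rabs; destruct (Rcase_abs _); intros; lra.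
  - apply IZR_le in C. assert (IZR l * PI >= 2 * PI) by nra.
    exfalso. revert H3. unfold Rabs; destruct (Rcase_abs _); intros; lra.
Qed.

Lemma sh_zero psih x : shannon psih -> ~ (PI <= Rabs x <= 2 * PI) -> Cnorm2 (psih x) = 0.
Proof. intros H Hx. apply (proj2 (H x)); exact Hx. Qed.

Lemma sh_one psih x : shannon psih -> PI <= Rabs x <= 2 * PI -> Cnorm2 (psih x) = 1.
Proof. intros H Hx. apply (proj1 (H x)); exact Hx. Qed.

Lemma sum_zero f n : (forall k, f k = 0) -> sum_f_R0 f n = 0.
Proof. intros H; induction n; simpl; rewrite ?IHn, H; ring. Qed.

Lemma pow2_ge u : (1 <= u)%nat -> 2 <= 2 ^ u.
Proof.
  intros H. destruct u; [lia|]. simpl. pose proof (pow_R1_Rle 2 u). lra.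
Qed.

Lemma Dn_pos psih d u lam : shannon psih -> (1 <= u)%nat -> -PI < lam < PI -> lam <> 0 ->
  D_u_norm2 psih d u lam = 0.
Proof.
  intros Hs Hu H1 H2. unfold D_u_norm2. apply sum_zero. intros k.
  rewrite D_u_T. unfold zsumC.
  assert (Z : forall l, fst (T psih d u lam k l) = 0 /\ snd (T psih d u lam k l) = 0).
  { intros l. apply T_zero.
    destruct (classic (PI <= Rabs (lam + 2 * IZR l * PI) <= 2 * PI)) as [C|C].
    - right. apply sh_zero; auto.
      pose proof (loc lam l H1 H2 C) as L. pose proof PI_bounds as HP.
      set (x := lam + 2 * IZR l * PI) in *.
      assert (Hx : Rabs x < 2 * PI).
      { destruct L as [[-> L]|[-> L]]; unfold x; simpl;
        unfold Rabs; destruct (Rcase_abs _); lra. }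
      pose proof (pow2_ge u Hu) as Hq. set (q := 2 ^ u) in *.
      unfold Rdiv. rewrite Rabs_mult. rewrite (Rabs_pos_eq (/ q)).
      2:{ left; apply Rinv_0_lt_compat; lra. }
      assert (Hi : / q * q = 1) by (field; lra).
      assert (Hi2 : 0 < / q) by (apply Rinv_0_lt_compat; lra).
      assert (Ha := Rabs_pos x).
      intros [C1 C2]. nra.
    - left. apply sh_zero; auto. }
  rewrite (zsumR_zero (fun l => fst (T psih d u lam k l))), (zsumR_zero (fun l => snd (T psih d u lam k l))).
  - unfold Cnorm2; simpl; ring.
  - intros l; apply Z.
  - intros l; apply Z.
Qed.

Lemma Rpower_sq a y : Rpower a y ^ 2 + 0 ^ 2 = Rpower a (2 * y).
Proof. replace (2 * y) with (y + y) by ring. rewrite Rpower_plus. ring. Qed.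

Lemma Dn0_right psih d lam : shannon psih -> 0 < lam < PI ->
  D_u_norm2 psih d 0 lam = Rpower (-1 * lam + 2 * PI) (- 4 * d).
Proof.
  intros Hs H1. pose proof PI_bounds as HP. unfold D_u_norm2. simpl.
  rewrite D_u_T. unfold zsumC.
  assert (Hx : Rabs (lam + 2 * IZR (-1) * PI) = -1 * lam + 2 * PI).
  { simpl. unfold Rabs; destruct (Rcase_abs _); lra. }
  assert (Hn : Cnorm2 (psih (lam + 2 * IZR (-1) * PI)) = 1).
  { apply sh_one; auto. rewrite Hx; lra. }
  destruct (T_one psih d lam (-1) Hn) as [E1 E2].
  rewrite (zsumR_single_neg (fun l => fst (T psih d 0 lam 0 l)) 0 (Rpower (-1 * lam + 2 * PI) (-2 * d))).
  rewrite (zsumR_zero (fun l => snd (T psih d 0 lam 0 l))).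
  - unfold Cnorm2; simpl fst; simpl snd. rewrite Rpower_sq. f_equal; ring.
  - intros l. destruct (Z.eq_dec l (-1)) as [->|N]; [exact E2|].
    apply T_zero. left. apply sh_zero; auto. intros C.
    destruct (loc lam l ltac:(lra) ltac:(lra) C) as [[? ?]|[? ?]]; [lra|congruence].
  - change (fst (T psih d 0 lam 0 (-1)%Z) = Rpower (-1 * lam + 2 * PI) (-2 * d)). rewrite E1, Hx. reflexivity.
  - intros l N. simpl in N.
    apply T_zero. left. apply sh_zero; auto. intros C.
    destruct (loc lam l ltac:(lra) ltac:(lra) C) as [[? ?]|[? ?]]; [lra|congruence].
Qed.

Lemma Dn0_left psih d lam : shannon psih -> -PI < lam < 0 ->
  D_u_norm2 psih d 0 lam = Rpower (1 * lam + 2 * PI) (- 4 * d).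
Proof.
  intros Hs H1. pose proof PI_bounds as HP. unfold D_u_norm2. simpl.
  rewrite D_u_T. unfold zsumC.
  assert (Hx : Rabs (lam + 2 * IZR 1 * PI) = 1 * lam + 2 * PI).
  { simpl. unfold Rabs; destruct (Rcase_abs _); lra. }
  assert (Hn : Cnorm2 (psih (lam + 2 * IZR 1 * PI)) = 1).
  { apply sh_one; auto. rewrite Hx; lra. }
  destruct (T_one psih d lam 1 Hn) as [E1 E2].
  rewrite (zsumR_single_pos (fun l => fst (T psih d 0 lam 0 l)) 1 (Rpower (1 * lam + 2 * PI) (-2 * d))).
  rewrite (zsumR_zero (fun l => snd (T psih d 0 lam 0 l))).
  - unfold Cnorm2; simpl fst; simpl snd. rewrite Rpower_sq. f_equal; ring.
  - intros l. destruct (Z.eq_dec l 1) as [->|N]; [exact E2|].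
    apply T_zero. left. apply sh_zero; auto. intros C.
    destruct (loc lam l ltac:(lra) ltac:(lra) C) as [[? ?]|[? ?]]; [congruence|lra].
  - change (fst (T psih d 0 lam 0 1%Z) = Rpower (1 * lam + 2 * PI) (-2 * d)). rewrite E1, Hx. reflexivity.
  - intros l N. simpl in N.
    apply T_zero. left. apply sh_zero; auto. intros C.
    destruct (loc lam l ltac:(lra) ltac:(lra) C) as [[? ?]|[? ?]]; [congruence|lra].
Qed.

Lemma chasles f a b c v1 v2 :
  (exists pr : Riemann_integrable f a b, RiemannInt pr = v1) ->
  (exists pr : Riemann_integrable f b c, RiemannInt pr = v2) ->
  exists pr : Riemann_integrable f a c, RiemannInt pr = v1 + v2.
Proof.
  intros [p1 H1] [p2 H2]. exists (RiemannInt_P24 p1 p2).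
  rewrite <- (RiemannInt_P26 p1 p2 (RiemannInt_P24 p1 p2)), H1, H2. reflexivity.
Qed.

Lemma I_pos psih d u : shannon psih -> (1 <= u)%nat -> I_u psih u d = 0.
Proof.
  intros Hs Hu. pose proof PI_bounds as HP. unfold I_u. apply Rint_eq.
  replace 0 with (0 + 0) by ring. apply chasles with 0.
  - apply zero_int; [lra|]. intros t Ht; apply Dn_pos; auto; lra.
  - apply zero_int; [lra|]. intros t Ht; apply Dn_pos; auto; lra.
Qed.

Lemma I_zero psih d : shannon psih -> I_u psih 0 d = 2 * g (- 4 * d).
Proof.
  intros Hs. pose proof PI_bounds as HP. unfold I_u. apply Rint_eq.
  rewrite g_val.
  replace (2 * (Prim (-4 * d) (2 * PI) - Prim (-4 * d) PI)) with
    ((Prim (-4*d) (1 * 0 + 2 * PI) - Prim (-4*d) (1 * (- PI) + 2 * PI)) / 1 +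
     (Prim (-4*d) (-1 * PI + 2 * PI) - Prim (-4*d) (-1 * 0 + 2 * PI)) / -1).
  2:{ replace (1 * 0 + 2 * PI) with (2 * PI) by ring.
      replace (1 * - PI + 2 * PI) with PI by ring.
      replace (-1 * PI + 2 * PI) with PI by ring.
      replace (-1 * 0 + 2 * PI) with (2 * PI) by ring. field. }
  apply chasles with 0.
  - apply aff_int; [lra|lra|intros; lra|]. intros t Ht. apply Dn0_left; auto; lra.
  - apply aff_int; [lra|lra|intros; lra|]. intros t Ht. apply Dn0_right; auto; lra.
Qed.

Lemma improper_unique f v1 v2 : improper_int f v1 -> improper_int f v2 -> v1 = v2.
Proof.
  intros H1 H2. destruct (Req_dec v1 v2) as [E|N]; auto. exfalso.
  set (e := Rabs (v1 - v2) / 2).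
  assert (He : e > 0) by (unfold e; pose proof (Rabs_pos_lt (v1 - v2) ltac:(lra)); lra).
  destruct (H1 e He) as [M1 K1]. destruct (H2 e He) as [M2 K2].
  set (B := Rabs M1 + Rabs M2).
  assert (A1 := Rle_abs M1). assert (A2 := Rle_abs M2).
  assert (A3 := Rabs_pos M1). assert (A4 := Rabs_pos M2).
  destruct (K1 (- B) B ltac:(unfold B; lra) ltac:(unfold B; lra)) as [p1 Q1].
  destruct (K2 (- B) B ltac:(unfold B; lra) ltac:(unfold B; lra)) as [p2 Q2].
  rewrite (RiemannInt_P5 p1 p2) in Q1. unfold e in *.
  revert Q1 Q2. set (I := RiemannInt p2). unfold Rabs.
  destruct (Rcase_abs (I - v1)); destruct (Rcase_abs (I - v2)); destruct (Rcase_abs (v1 - v2)); lra.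
Qed.

Lemma K_val psih d : shannon psih -> K_d psih d = 2 * g (- 2 * d).
Proof.
  intros Hs. pose proof PI_bounds as HP. unfold K_d, RintR.
  set (F := fun xi => Rpower (Rabs xi) (-2 * d) * Cnorm2 (psih xi)).
  assert (HI : improper_int F (2 * g (-2 * d))).
  { intros eps Heps. exists 8. intros a b Ha Hb.
    assert (Z : forall t, ~ (PI <= Rabs t <= 2 * PI) -> F t = 0).
    { intros t Ht. unfold F. rewrite sh_zero; auto. ring. }
    assert (P : exists pr : Riemann_integrable F a b, RiemannInt pr = 2 * g (-2 * d)).
    { rewrite g_val.
      replace (2 * (Prim (-2 * d) (2 * PI) - Prim (-2 * d) PI)) with
        (0 + ((Prim (-2*d) (-1 * (- PI) + 0) - Prim (-2*d) (-1 * (-(2*PI)) + 0)) / -1 +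
         (0 + ((Prim (-2*d) (1 * (2*PI) + 0) - Prim (-2*d) (1 * PI + 0)) / 1 + 0)))).
      2:{ replace (-1 * - PI + 0) with PI by ring.
          replace (-1 * - (2 * PI) + 0) with (2 * PI) by ring.
          replace (1 * (2 * PI) + 0) with (2 * PI) by ring.
          replace (1 * PI + 0) with PI by ring. field. }
      apply chasles with (-(2*PI)).
      { apply zero_int; [lra|]. intros t Ht. apply Z.
        unfold Rabs; destruct (Rcase_abs t); lra. }
      apply chasles with (- PI).
      { apply aff_int; [lra|lra|intros; lra|]. intros t Ht. unfold F.
        assert (Ea : Rabs t = -1 * t + 0) by (unfold Rabs; destruct (Rcase_abs t); lra).
        rewrite sh_one; auto; rewrite Ea; [ring|lra]. }
      apply chasles with PI.
      { apply zero_int; [lra|]. intros t Ht. apply Z.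
        unfold Rabs; destruct (Rcase_abs t); lra. }
      apply chasles with (2 * PI).
      { apply aff_int; [lra|lra|intros; lra|]. intros t Ht. unfold F.
        assert (Ea : Rabs t = 1 * t + 0) by (unfold Rabs; destruct (Rcase_abs t); lra).
        rewrite sh_one; auto; rewrite Ea; [ring|lra]. }
      { apply zero_int; [lra|]. intros t Ht. apply Z.
        unfold Rabs; destruct (Rcase_abs t); lra. } }
    destruct P as [pr Hpr]. exists pr. rewrite Hpr, Rminus_diag, Rabs_R0. lra. }
  apply improper_unique with F; auto.
  apply (epsilon_spec (inhabits 0) (improper_int F) (ex_intro _ _ HI)).
Qed.

Lemma V_off psih d i j : shannon psih -> i <> j -> V_d psih d i j = 0.
Proof.
  intros Hs N. unfold V_d. rewrite I_pos; auto.
  - unfold Rdiv; ring.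
  - unfold absdiff; lia.
Qed.

Lemma V_diag psih d i : shannon psih ->
  V_d psih d i i = 4 * PI * 2 ^ i * (2 * g (-4 * d)) / (2 * g (-2 * d)) ^ 2.
Proof.
  intros Hs. unfold V_d.
  replace (absdiff i i) with 0%nat by (unfold absdiff; lia).
  rewrite Nat.min_id, I_zero, K_val; auto. simpl INR.
  rewrite Rmult_0_r, Rpower_O by lra. rewrite Rmult_1_r. reflexivity.
Qed.

Lemma sum_single f n i : (forall j, j <> i -> f j = 0) ->
  sum_f_R0 f n = if Nat.leb i n then f i else 0.
Proof.
  intros H. induction n as [|n IH].
  - simpl. destruct i as [|i]; simpl; auto.
  - simpl. rewrite IH.
    destruct (Nat.leb_spec i n) as [Ha|Ha]; destruct (Nat.leb_spec i (S n)) as [Hb|Hb]; try lia.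
    + rewrite (H (S n)) by lia; ring.
    + replace (S n) with i by lia. ring.
    + rewrite (H (S n)) by lia; ring.
Qed.

Theorem mainTheorem12 (psih : R -> Cx) (Hpsi : shannon psih) (d : R) (l : nat)
  (Hl : (1 <= l)%nat) :
  sum_f_R0 (fun i => sum_f_R0 (fun j => wAV l i * V_d psih d i j * wAV l j) l) l
  = PI * g (- 4 * d)
    / (2 * (2 - (/ 2) ^ l) * kappa l * (ln 2) ^ 2 * (g (- 2 * d)) ^ 2).
Proof.
  rewrite (sum_eq _ (fun i => wAV l i * (4 * PI * 2 ^ i * (2 * g (-4 * d)) / (2 * g (-2 * d)) ^ 2) * wAV l i)).
  2:{ intros i Hi. rewrite (sum_single _ l i).
      - destruct (Nat.leb_spec i l); try lia. rewrite V_diag; auto.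
      - intros j N. rewrite V_off; auto. ring. }
  assert (HS : 0 < 2 - (/ 2) ^ l).
  { rewrite pow_inv. pose proof (pow2_ge l Hl).
    assert (/ 2 ^ l <= / 2) by (apply Rinv_le_contravar; lra). lra. }
  assert (Hln : ln 2 <> 0) by (pose proof ln_lt_2; lra).
  set (SS := 2 - (/ 2) ^ l) in *.
  set (G4 := g (-4 * d)). set (G2 := g (-2 * d)).
  destruct (Req_dec G2 0) as [E|NG].
  { rewrite E. replace ((2 * 0) ^ 2) with 0 by ring. replace (2 * SS * kappa l * ln 2 ^ 2 * 0 ^ 2) with 0 by ring.
    unfold Rdiv. rewrite Rinv_0. rewrite sum_zero; [ring|]. intros; ring. }
  destruct (Req_dec (kappa l) 0) as [E|NK].
  { unfold wAV. fold SS. rewrite E. replace (2 * ln 2 * 0 * SS) with 0 by ring.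
    replace (2 * SS * 0 * ln 2 ^ 2 * G2 ^ 2) with 0 by ring.
    unfold Rdiv. rewrite !Rinv_0. rewrite sum_zero; [ring|]. intros; ring. }
  set (R0 := SS * (4 * PI * (2 * G4)) / ((2 * ln 2 * kappa l * SS) ^ 2 * (2 * G2) ^ 2)).
  rewrite (sum_eq _ (fun i => (INR i - eta l) ^ 2 * (/ 2) ^ i / SS * R0)).
  2:{ intros i _. unfold wAV, R0. fold SS. replace ((/ 2) ^ i) with (/ 2 ^ i) by (symmetry; apply pow_inv).
      assert (2 ^ i <> 0) by (apply pow_nonzero; lra). set (p := 2 ^ i) in *. clearbody p SS G4 G2. clear R0. field. repeat split; auto; lra. }
  rewrite <- scal_sum.
  assert (Ek : sum_f_R0 (fun i => (INR i - eta l) ^ 2 * (/ 2) ^ i / SS) l = kappa l) by reflexivity.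
  rewrite Ek. unfold R0. clearbody SS G4 G2. field.
  repeat split; auto; lra.
Qed.
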